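(* Let $\Sigma$ be a finite alphabet and $C:\Sigma^k\to\Sigma^n$ a $(q,\delta,1,s)$-relaxed locally decodable code whose relaxed decoder is nonadaptive of the following form: for each $i\in[k]$ there is a distribution $\mathcal{Q}_i$ over $q$-element subsets of $[n]$ and for each $Q\in\mathrm{supp}(\mathcal{Q}_i)$ a function $f_{i,Q}:\Sigma^Q\to\Sigma\cup\{\bot\}$; on input $y$ and $i$ it samples $Q\sim\mathcal{Q}_i$ and outputs $f_{i,Q}(y|_Q)$. Fix $i\in[k]$ and a codeword $c=C(b)$. Let $c'\in\Sigma^n$ be the random word with $c'_j=c_j$ for $j\in L_i$ and $c'_j$ an independent uniformly random symbol of $\Sigma$ for $j\in H_i$. Then for every $(i,c)$-nonsmoothable query set $Q\in\mathrm{supp}(\mathcal{Q}_i)$, \[ \Pr_{c'}\bigl[f_{i,Q}(c'|_Q)\notin\{b_i,\bot\}\bigr]\ \ge\ |\Sigma|^{-|H(Q)|}\ \ge\ |\Sigma|^{-q}, \] where $H(Q):=Q\cap H_i$.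
   Context: $C$ is a $(q,\delta,1,s)$-RLDC if the decoder (outputs in $\Sigma\cup\{\bot\}$) satisfies, for all $b\in\Sigma^k$, $i\in[k]$, $y\in\Sigma^n$ with Hamming distance $\Delta(y,C(b))\le\delta n$: $\Pr[\mathsf{Dec}^{C(b)}(i)=b_i]=1$ and $\Pr[\mathsf{Dec}^y(i)\notin\{b_i,\bot\}]\le s$. $x|_S$ is the restriction of $x$ to coordinates in $S$. $p_i(j):=\Pr_{Q\sim\mathcal{Q}_i}[j\in Q]$, $H_i:=\{j:p_i(j)>q/(\delta n)\}$, $L_i:=[n]\setminus H_i$, $L(Q):=Q\cap L_i$. $Q$ is $(i,c)$-nonsmoothable if there exists $b'\in\Sigma^k$ with $C(b')|_{L(Q)}=c|_{L(Q)}$ and $b'_i\ne b_i$. *)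

(* Defs.v *)
From mathcomp Require Import all_boot all_order all_algebra.
Set Implicit Arguments. Unset Strict Implicit. Unset Printing Implicit Defensive.
Import Order.TTheory GRing.Theory Num.Theory.
Local Open Scope ring_scope.

Definition hamming (Sigma : finType) (n : nat) (x y : {ffun 'I_n -> Sigma}) : nat :=
  #|[set j | x j != y j]|.

(* Nonadaptive decoder: D i Q = probability that query set Q is sampled for
   index i (the distribution Q_i); f i Q y = f_{i,Q}(y|_Q), with None = bot. *)

Definition dec_prob (R : realFieldType) (Sigma : finType) (k n : nat)
  (D : 'I_k -> {set 'I_n} -> R)
  (f : 'I_k -> {set 'I_n} -> {ffun 'I_n -> Sigma} -> option Sigma)
  (y : {ffun 'I_n -> Sigma}) (i : 'I_k) (P : pred (option Sigma)) : R :=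
  \sum_(Q : {set 'I_n}) D i Q * (P (f i Q y) : nat)%:R.

Definition query_distr (R : realFieldType) (k n q : nat)
  (D : 'I_k -> {set 'I_n} -> R) : Prop :=
  forall i : 'I_k,
    [/\ forall Q, 0 <= D i Q,
        \sum_(Q : {set 'I_n}) D i Q = 1
      & forall Q, 0 < D i Q -> #|Q| = q].

Definition local_fun (R : realFieldType) (Sigma : finType) (k n : nat)
  (D : 'I_k -> {set 'I_n} -> R)
  (f : 'I_k -> {set 'I_n} -> {ffun 'I_n -> Sigma} -> option Sigma) : Prop :=
  forall i Q, 0 < D i Q ->
    forall y y' : {ffun 'I_n -> Sigma},
      (forall j, j \in Q -> y j = y' j) -> f i Q y = f i Q y'.

Definition is_RLDC (R : realFieldType) (Sigma : finType) (k n q : nat)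
  (delta s : R) (C : {ffun 'I_k -> Sigma} -> {ffun 'I_n -> Sigma})
  (D : 'I_k -> {set 'I_n} -> R)
  (f : 'I_k -> {set 'I_n} -> {ffun 'I_n -> Sigma} -> option Sigma) : Prop :=
  [/\ query_distr q D,
      local_fun D f,
      (forall b i, dec_prob D f (C b) i (pred1 (Some (b i))) = 1)
    & (forall b i y, (hamming y (C b))%:R <= delta * n%:R ->
         dec_prob D f y i (fun o => o \notin [:: Some (b i); None]) <= s)].

Definition pmass (R : realFieldType) (k n : nat) (D : 'I_k -> {set 'I_n} -> R)
  (i : 'I_k) (j : 'I_n) : R :=
  \sum_(Q : {set 'I_n} | j \in Q) D i Q.

Definition Hset (R : realFieldType) (k n q : nat) (delta : R)
  (D : 'I_k -> {set 'I_n} -> R) (i : 'I_k) : {set 'I_n} :=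
  [set j | q%:R / (delta * n%:R) < pmass D i j].

Definition Lset (R : realFieldType) (k n q : nat) (delta : R)
  (D : 'I_k -> {set 'I_n} -> R) (i : 'I_k) : {set 'I_n} :=
  ~: Hset q delta D i.

Definition nonsmoothable (R : realFieldType) (Sigma : finType) (k n q : nat)
  (delta : R) (C : {ffun 'I_k -> Sigma} -> {ffun 'I_n -> Sigma})
  (D : 'I_k -> {set 'I_n} -> R) (i : 'I_k) (b : {ffun 'I_k -> Sigma})
  (Q : {set 'I_n}) : Prop :=
  exists b' : {ffun 'I_k -> Sigma},
    (forall j, j \in Q :&: Lset q delta D i -> C b' j = C b j) /\ b' i != b i.

(* Pr_{c'}[P c'] where c' agrees with c on L_i and is independent uniform on H_i:
   uniform distribution over the words agreeing with c on L_i. *)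
Definition prob_cprime (R : realFieldType) (Sigma : finType) (n : nat)
  (L : {set 'I_n}) (c : {ffun 'I_n -> Sigma}) (P : pred {ffun 'I_n -> Sigma}) : R :=
  (#|[set y : {ffun 'I_n -> Sigma} | [forall j in L, y j == c j] && P y]|%:R)
  / (#|[set y : {ffun 'I_n -> Sigma} | [forall j in L, y j == c j]]|%:R).
Arguments prob_cprime R [Sigma n] L c P.

(* Main.v *)
Require Import Defs.
From mathcomp Require Import all_boot all_order all_algebra.
Import Order.TTheory GRing.Theory Num.Theory.
Local Open Scope ring_scope.

Theorem mainTheorem4 (R : realFieldType) (Sigma : finType) (k n q : nat)
  (delta s : R) (C : {ffun 'I_k -> Sigma} -> {ffun 'I_n -> Sigma})
  (D : 'I_k -> {set 'I_n} -> R)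
  (f : 'I_k -> {set 'I_n} -> {ffun 'I_n -> Sigma} -> option Sigma) :
  is_RLDC q delta s C D f ->
  forall (i : 'I_k) (b : {ffun 'I_k -> Sigma}) (Q : {set 'I_n}),
    0 < D i Q ->
    nonsmoothable q delta C D i b Q ->
    (#|Sigma|%:R ^- #|Q :&: Hset q delta D i|
       <= prob_cprime R (Lset q delta D i) (C b)
                    (fun y => f i Q y \notin [:: Some (b i); None]))
    /\ (#|Sigma|%:R ^- q <= (#|Sigma|%:R : R) ^- #|Q :&: Hset q delta D i|).
Proof.
move=> [Hq Hloc Hcomp _] i b Q DQ [b' [Hb' neb]].
have [Dge0 Dsum Dq] := Hq i.
set H := Hset q delta D i; set L := Lset q delta D i; set A := Q :&: H.
have hf : f i Q (C b') = Some (b' i).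
  have Hs := Hcomp b' i; rewrite /dec_prob in Hs.
  have H0 : \sum_(Q0 : {set 'I_n}) D i Q0 *
      (1 - ((pred1 (Some (b' i)) (f i Q0 (C b')) : bool) : nat)%:R) = 0.
    under eq_bigr do rewrite mulrBr mulr1.
    by rewrite sumrB Dsum Hs subrr.
  have nn : forall Q0 : {set 'I_n}, true -> 0 <= D i Q0 *
      (1 - ((pred1 (Some (b' i)) (f i Q0 (C b')) : bool) : nat)%:R).
    by move=> Q0 _; rewrite /=; case: (f i Q0 (C b') == _); rewrite /= ?subr0 ?subrr ?mulr0 ?mulr1.
  have := psumr_eq0P nn H0 (i:=Q) isT.
  rewrite /=; case: (f i Q (C b') =P Some (b' i)) => // _.
  by rewrite subr0 mulr1 => h; move: DQ; rewrite h ltxx.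
have sgt0 : (0 < #|Sigma|)%N by apply/card_gt0P; exists (b i).
set S0 := [set y : {ffun 'I_n -> Sigma} | [forall j in L, y j == C b j]].
set S1 := [set y : {ffun 'I_n -> Sigma} |
   [forall j in L, y j == C b j] && [forall j in A, y j == C b' j]].
set SN := [set y : {ffun 'I_n -> Sigma} | [forall j in L, y j == C b j] &&
   (f i Q y \notin [:: Some (b i); None])].
have LA : forall j, j \in L -> j \notin A.
  by move=> j; rewrite /L /Lset /A in_setC in_setI => /negbTE ->; rewrite andbF.
have S1N : S1 \subset SN.
  apply/subsetP => y; rewrite !inE => /andP [hL hA]; rewrite hL /=.
  have -> : f i Q y = f i Q (C b').
    apply: Hloc => // j jQ.
    case: (boolP (j \in L)) => jL.
      rewrite (eqP (forall_inP hL j jL)) Hb' //; by rewrite inE jQ jL.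
    apply/eqP/(forall_inP hA); move: jL; rewrite /L /Lset in_setC negbK => jH; by rewrite /A inE jQ jH.
  rewrite hf orbF; apply/negP => /eqP [] e.
  by rewrite e eqxx in neb.
pose F (y : {ffun 'I_n -> Sigma}) :=
  ([ffun j => if j \in A then C b' j else y j],
   [ffun x : {j : 'I_n | j \in A} => y (val x)]).
have Finj : injective F.
  move=> y1 y2 e; apply/ffunP => j.
  case: (boolP (j \in A)) => hj.
    have e2 := congr1 snd e; move/ffunP: e2 => /(_ (Sub j hj)).
    by rewrite !ffunE.
  have e1 := congr1 fst e; move/ffunP: e1 => /(_ j).
  by rewrite !ffunE (negbTE hj).
have cnt : (#|S0| <= #|S1| * #|Sigma| ^ #|A|)%N.
  rewrite -(card_imset S0 Finj).
  have sub : F @: S0 \subset setX S1 [set: {ffun {j : 'I_n | j \in A} -> Sigma}].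
    apply/subsetP => p /imsetP [y]; rewrite inE => hL ->.
    rewrite inE /= inE !inE andbT; apply/andP; split.
      apply/forall_inP => j jL; rewrite ffunE (negbTE (LA j jL)).
      exact: (forall_inP hL j jL).
    by apply/forall_inP => j jA; rewrite ffunE jA.
  apply: (leq_trans (subset_leq_card sub)).
  by rewrite cardsX cardsT card_ffun card_sig.
have N0gt0 : (0 < #|S0|)%N.
  by apply/card_gt0P; exists (C b); rewrite inE; apply/forall_inP.
split.
  rewrite /prob_cprime -/L -/SN -/S0 ler_pdivlMr ?ltr0n //.
  apply: (le_trans (y := #|Sigma|%:R ^- #|A| * (#|S1|%:R * #|Sigma|%:R ^+ #|A|))).
    by rewrite ler_wpM2l ?invr_ge0 ?exprn_ge0 // -natrX -natrM ler_nat.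
  rewrite mulrC -mulrA mulfV ?mulr1 ?expf_neq0 ?pnatr_eq0 -?lt0n //.
  by rewrite ler_nat subset_leq_card.
rewrite lef_pV2 ?posrE ?exprn_gt0 ?ltr0n //.
apply: ler_weXn2l; first by rewrite ler1n.
by rewrite -(Dq Q DQ) subset_leq_card // subsetIl.
Qed.
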